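(* Let $I=(i_1\leq i_2\leq\cdots\leq i_r)$ with $r\geq3$ and suppose $I$ has a repeated entry, $i_s=i_{s+1}$ for some $s$. Let $\chi_I=\sum_\varepsilon a_I^\varepsilon w_I^\varepsilon$ with $a_I^\varepsilon\in\mathcal B$, the sum over binary $r$-tuples $\varepsilon=(\epsilon_1,\dots,\epsilon_r)$ with $1\leq\sum\epsilon_j\leq r-1$. If $\alpha(\chi_I)+\beta(\chi_I)=\gamma(\chi_I)+\delta(\chi_I)$, then $\chi_I=0$.
   Context: $\mathcal B$ is a graded commutative rational algebra and $W$ a graded rational vector space concentrated in odd degrees with basis $\{w_i\}$ indexed by a totally ordered set. In $\mathcal B\otimes\land W\otimes\land W$ write $w_i^0=w_i=1\otimes w_i\otimes1$ and $w_i^1=w'_i=1\otimes1\otimes w_i$, and $w_I^\varepsilon=w_{i_1}^{\epsilon_1}\cdots w_{i_r}^{\epsilon_r}$. In $\mathcal B\otimes\land W^{\otimes 3}$ write $w,w',w''$ for $w$ in the three copies. Algebra maps $\alpha,\beta,\gamma,\delta\colon\mathcal B\otimes\land W\otimes\land W\to\mathcal B\otimes\land W\otimes\land W\otimes\land W$, identity on $\mathcal B$, are given by $\alpha(w)=w,\alpha(w')=w'$; $\beta(w)=w+w',\beta(w')=w''$; $\gamma(w)=w,\gamma(w')=w'+w''$; $\delta(w)=w',\delta(w')=w''$. *)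

(* Defs.v *)
From HB Require Import structures.
From mathcomp Require Import all_boot all_order all_algebra.
Set Implicit Arguments. Unset Strict Implicit. Unset Printing Implicit Defensive.
Import Order.TTheory GRing.Theory.
Local Open Scope ring_scope.

(* Concrete model of  B (x) /\W (x) ... (x) /\W  (k copies) as a left
   B-module, which is all the statement uses (the algebra maps are the
   identity on B and B-linear).
   A generator (c, i) stands for w_i in the c-th copy of /\W
   (c = 0 : w_i, c = 1 : w'_i, c = 2 : w''_i).  All generators are odd, and
   /\W (x) /\W (x) /\W (graded tensor product) = /\(W + W + W), so
   generators anticommute and square to zero. *)
Section Ext.
Variables (d : Order.disp_t) (T : orderType d) (B : lmodType rat).

Definition gen := (nat * T)%type.

(* an auxiliary strict total order on generators, used only to compute
   signs of permutations of words *)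
Definition gen_lt (x y : gen) : bool :=
  (x.2 < y.2)%O || ((x.2 == y.2) && (x.1 < y.1)%N).

Fixpoint inv (s : seq gen) : nat :=
  match s with
  | [::] => 0%N
  | x :: s' => (count (fun y => gen_lt y x) s' + inv s')%N
  end.

(* formal expression  sum_k b_k * w_{s_k}  (b_k in B, s_k a word of generators) *)
Definition elt := seq (B * seq gen).

(* coefficient of the (uniq) word u, i.e. of the basis monomial w_u of the
   exterior algebra: words with a repeated generator are 0, and a
   permutation of u contributes with the sign of the permutation. *)
Definition coef (x : elt) (u : seq gen) : B :=
  \sum_(t <- x | perm_eq t.2 u && uniq t.2)
     ((-1 : rat) ^+ (inv t.2 + inv u)) *: t.1.

Definition ext_eq (x y : elt) : Prop := forall u, coef x u = coef y u.

(* product of linear forms l_1 ... l_n (each a rational combination of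
   generators), expanded into rational multiples of words *)
Fixpoint expand (ls : seq (seq (rat * gen))) : seq (rat * seq gen) :=
  match ls with
  | [::] => [:: (1, [::])]
  | l :: ls' => [seq (c.1 * p.1, c.2 :: p.2) | c <- l, p <- expand ls']
  end.

(* the algebra map, identity on B, sending each generator g to the
   linear form f g *)
Definition amap (f : gen -> seq (rat * gen)) (x : elt) : elt :=
  flatten [seq [seq (p.1 *: t.1, p.2) | p <- expand (map f t.2)] | t <- x].

(* alpha, beta, gamma, delta : B(x)/\W(x)/\W -> B(x)/\W(x)/\W(x)/\W *)
Definition alpha_gen (g : gen) : seq (rat * gen) := [:: (1, g)].
Definition beta_gen (g : gen) : seq (rat * gen) :=
  if g.1 == 0%N then [:: (1, (0%N, g.2)); (1, (1%N, g.2))]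
  else [:: (1, (2%N, g.2))].
Definition gamma_gen (g : gen) : seq (rat * gen) :=
  if g.1 == 0%N then [:: (1, (0%N, g.2))]
  else [:: (1, (1%N, g.2)); (1, (2%N, g.2))].
Definition delta_gen (g : gen) : seq (rat * gen) :=
  if g.1 == 0%N then [:: (1, (1%N, g.2))] else [:: (1, (2%N, g.2))].

Definition alpha := amap alpha_gen.
Definition beta := amap beta_gen.
Definition gamma := amap gamma_gen.
Definition delta := amap delta_gen.

Definition wordI (r : nat) (I : r.-tuple T) (e : r.-tuple bool) : seq gen :=
  zip (map nat_of_bool e) I.

Definition chi (r : nat) (I : r.-tuple T) (a : r.-tuple bool -> B) : elt :=
  [seq (a e, wordI I e) |
     e <- filter (fun e : r.-tuple bool => (0 < count id e < r)%N)
                 (enum {: r.-tuple bool})].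

End Ext.

(* Main.v *)
Require Import Defs.
From HB Require Import structures.
From mathcomp Require Import all_boot all_order all_algebra.
From mathcomp Require Import ring lra zify.
Import Order.TTheory GRing.Theory.
Local Open Scope ring_scope.
Set Implicit Arguments. Unset Strict Implicit. Unset Printing Implicit Defensive.

Section Gen.
Variables (d : Order.disp_t) (T : orderType d).
Local Notation gen := (gen T).
Local Notation ninv := (@Defs.inv d T).

Implicit Types (f : gen -> seq (rat * gen)%type) (s v u : seq gen).

Definition dl (w u : seq gen) : rat :=
  if perm_eq w u && uniq w then (-1) ^+ (ninv w + ninv u) else 0.

Definition E (f : gen -> seq (rat * gen)) (s u : seq gen) : rat :=
  \sum_(p <- expand (map f s)) p.1 * dl p.2 u.

Lemma sum_expand_cons (l : seq (rat * gen)) ls (G : rat * seq gen -> rat) :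
  \sum_(p <- expand (l :: ls)) G p =
  \sum_(c <- l) \sum_(p <- expand ls) G (c.1 * p.1, c.2 :: p.2).
Proof. by rewrite /= big_allpairs_dep. Qed.

Lemma expand_anti (A C : seq (seq (rat * gen))) L (G : rat * seq gen -> rat) :
  (forall k pre w1 w2 post,
      G (k, pre ++ w1 :: w2 :: post) = - G (k, pre ++ w2 :: w1 :: post)) ->
  \sum_(p <- expand (A ++ L :: L :: C)) G p = 0.
Proof.
elim: A G => [|l A IH] G HG.
  rewrite cat0s sum_expand_cons.
  set S := (X in X = 0).
  have HS : S = - S.
    rewrite /S.
    under eq_bigr do rewrite sum_expand_cons.
    rewrite {1}exchange_big /= -sumrN; apply: eq_bigr => c2 _.
    rewrite -sumrN; apply: eq_bigr => c1 _.
    rewrite -sumrN; apply: eq_bigr => q _ /=.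
    by rewrite (HG _ [::]) /= mulrCA.
  lra.
rewrite cat_cons sum_expand_cons big1 // => c _.
apply: (IH (fun p => G (c.1 * p.1, c.2 :: p.2))) => k pre w1 w2 post.
exact: (HG _ (c.2 :: pre)).
Qed.

Lemma gen_lt_total (x y : gen) : x != y -> gen_lt x y = ~~ gen_lt y x.
Proof.
case: x => n t; case: y => m t' /=.
rewrite /gen_lt /=.
case: (ltgtP t t') => [h|h|<-] /=.
- by [].
- by [].
move=> H.
have Hnm : n != m by apply: contraNneq H => ->.
case: (ltngtP n m) => //. by move=> e; rewrite e eqxx in Hnm.
Qed.

Lemma perm_sw (w1 w2 : gen) post : perm_eq [:: w1, w2 & post] [:: w2, w1 & post].
Proof. apply/permP => P /=; lia. Qed.

Lemma inv_swap (pre post : seq gen) w1 w2 :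
  (ninv (pre ++ w1 :: w2 :: post) + gen_lt w1 w2 =
   ninv (pre ++ w2 :: w1 :: post) + gen_lt w2 w1)%N.
Proof.
elim: pre => [|x pre IH] /=.
  rewrite !addnA. lia.
have -> : count (fun y => gen_lt y x) (pre ++ [:: w1, w2 & post]) =
          count (fun y => gen_lt y x) (pre ++ [:: w2, w1 & post]).
  by apply/permP; rewrite perm_cat2l perm_sw.
lia.
Qed.

Lemma dl_swap pre w1 w2 post u :
  dl (pre ++ w1 :: w2 :: post) u = - dl (pre ++ w2 :: w1 :: post) u.
Proof.
have Hp : perm_eq (pre ++ w1 :: w2 :: post) (pre ++ w2 :: w1 :: post).
  by rewrite perm_cat2l perm_sw.
rewrite /dl (perm_uniq Hp) (permPl Hp).
case: ifP => [/andP [_ Hu]|]; last by rewrite oppr0.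
have Hne : w1 != w2.
  move: Hu; rewrite cat_uniq => /and3P [_ _] /=; rewrite inE negb_or.
  by case/andP => /andP [H _] _; rewrite eq_sym.
have := inv_swap pre post w1 w2.
rewrite (gen_lt_total Hne).
case: (gen_lt w2 w1) => /= H.
  have -> : (ninv (pre ++ [:: w1, w2 & post]) + ninv u =
     (ninv (pre ++ [:: w2, w1 & post]) + ninv u).+1)%N by lia.
  by rewrite exprS mulN1r.
have -> : (ninv (pre ++ [:: w2, w1 & post]) + ninv u =
     (ninv (pre ++ [:: w1, w2 & post]) + ninv u).+1)%N by lia.
by rewrite exprS mulN1r opprK.
Qed.

Lemma E_anti f pre x post u : E f (pre ++ x :: x :: post) u = 0.
Proof.
rewrite /E map_cat.
apply: (expand_anti (map f pre) (map f post) (f x)).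
by move=> k pre' w1 w2 post' /=; rewrite dl_swap mulrN.
Qed.


Lemma expand_coef1 f s p : (forall x c, c \in f x -> c.1 = 1) ->
  p \in expand (map f s) -> p.1 = 1.
Proof.
move=> Hf; elim: s p => [|x s IH] p /=; first by rewrite inE => /eqP ->.
by case/allpairsP => [[c q] [/= Hc Hq ->]] /=; rewrite (Hf _ _ Hc) (IH _ Hq) mulr1.
Qed.

Lemma expand_map_g f (g : gen -> gen) s p :
  {in s, forall x c, c \in f x -> g c.2 = x} ->
  p \in expand (map f s) -> map g p.2 = s.
Proof.
elim: s p => [|x s IH] p Hg /=; first by rewrite inE => /eqP ->.
case/allpairsP => [[c q] [/= Hc Hq ->]] /=.
rewrite (Hg x (mem_head _ _) _ Hc) (IH q) // => z Hz; apply: Hg.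
by rewrite inE Hz orbT.
Qed.

Lemma expand_sub f s p y : p \in expand (map f s) -> y \in p.2 ->
  exists2 x, x \in s & y \in map snd (f x).
Proof.
elim: s p => [|x s IH] p /=; first by rewrite inE => /eqP -> .
case/allpairsP => [[c q] [/= Hc Hq ->]] /=; rewrite inE => /orP [/eqP ->|Hy].
  by exists x; rewrite ?mem_head //; apply/mapP; exists c.
by have [z Hz Hyz] := IH q Hq Hy; exists z => //; rewrite inE Hz orbT.
Qed.

Lemma expand_single f s p x y : p \in expand (map f s) -> x \in s ->
  map snd (f x) = [:: y] -> y \in p.2.
Proof.
elim: s p => [|z s IH] p //=.
case/allpairsP => [[c q] [/= Hc Hq ->]] /=; rewrite inE => /orP [/eqP Hxz|Hx] Hf.
  have : c.2 \in map snd (f x) by apply/mapP; exists c => //; rewrite Hxz.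
  by rewrite Hf inE => /eqP ->; rewrite mem_head.
by rewrite inE (IH q Hq Hx Hf) orbT.
Qed.

Lemma sum_eq_mem (l : seq (rat * gen)) y : uniq (map snd l) ->
  \sum_(c <- l) ((c.2 == y)%:R : rat) = (y \in map snd l)%:R.
Proof.
elim: l => [|c l IH] /=; first by rewrite big_nil.
case/andP => Hc Hu; rewrite big_cons IH // inE.
rewrite eq_sym; case: (y =P c.2) => [->|_] /=; last by rewrite add0r.
by rewrite (negbTE Hc) addr0.
Qed.

Lemma sum_expand_eq f s w : (forall x, uniq (map snd (f x))) ->
  \sum_(p <- expand (map f s)) ((p.2 == w)%:R : rat) =
  (all2 (fun y x => y \in map snd (f x)) w s)%:R.
Proof.
move=> Hu; elim: s w => [|x s IH] w.
  by rewrite /= big_cons big_nil addr0; case: w.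
rewrite map_cons sum_expand_cons; case: w => [|y w].
  by rewrite big1 // => c _; rewrite big1.
transitivity (\sum_(c <- f x) ((c.2 == y)%:R * (all2 (fun y x => y \in map snd (f x)) w s)%:R : rat)).
  apply: eq_bigr => c _; rewrite -IH mulr_sumr; apply: eq_bigr => q _ /=.
  by rewrite eqseq_cons; case: (c.2 == y); rewrite ?mul1r ?mul0r.
by rewrite -mulr_suml sum_eq_mem // /= -natrM mulnb.
Qed.

Lemma inv_map (h : gen -> gen) w :
  {in w &, forall x y, gen_lt (h x) (h y) = gen_lt x y} -> ninv (map h w) = ninv w.
Proof.
elim: w => [|x w IH] Hh //=.
rewrite IH; last by move=> a b Ha Hb; apply: Hh; rewrite inE ?Ha ?Hb orbT.
congr (_ + _)%N; rewrite count_map; apply: eq_in_count => z Hz /=.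
by apply: Hh; rewrite inE ?Hz ?eqxx ?orbT.
Qed.

Lemma all2_map (h : gen -> gen) f s :
  {in s, forall x, h x \in map snd (f x)} ->
  all2 (fun y x => y \in map snd (f x)) (map h s) s.
Proof.
elim: s => [|x s IH] //= H; rewrite H ?mem_head //= IH // => z Hz.
by apply: H; rewrite inE Hz orbT.
Qed.

Lemma E_clean f (g h : gen -> gen) s v :
  (forall x c, c \in f x -> c.1 = 1) ->
  {in s, forall x c, c \in f x -> g c.2 = x} ->
  (forall x, uniq (map snd (f x))) ->
  {in v, forall x, h x \in map snd (f x)} ->
  {in v, forall x, g (h x) = x} ->
  {in v &, forall x y, gen_lt (h x) (h y) = gen_lt x y} ->
  E f s (map h v) = dl s v.
Proof.
move=> H1 H2 H3 H4 H5 H6.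
have Hinj : {in v &, injective h}.
  by move=> x y Hx Hy Hxy; rewrite -(H5 x Hx) -(H5 y Hy) Hxy.
rewrite /E.
transitivity (\sum_(p <- expand (map f s)) ((p.2 == map h s)%:R * dl s v)).
  apply: eq_big_seq => p Hp; rewrite (expand_coef1 H1 Hp) mul1r.
  have Hg := expand_map_g H2 Hp.
  rewrite {1}/dl; case: (boolP (perm_eq p.2 (map h v) && uniq p.2)).
    case/andP => Hpe Hu.
    have Hpg : map h s = p.2.
      rewrite -Hg -map_comp; apply: map_id_in => y Hy /=.
      have : y \in map h v by rewrite -(perm_mem Hpe).
      by case/mapP => x Hx ->; rewrite H5.
    have Hvv : map g (map h v) = v.
      by rewrite -map_comp; apply: map_id_in => x Hx /=; rewrite H5.
    have Hsv : perm_eq s v by rewrite -Hg -Hvv perm_map.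
    have Huv : uniq v.
      by rewrite -(map_inj_in_uniq Hinj) -(perm_uniq Hpe).
    have Hus : uniq s by rewrite (perm_uniq Hsv).
    rewrite Hpg eqxx mul1r /dl Hsv Hus -Hpg.
    have Hsub : {subset s <= v} by move=> x; rewrite (perm_mem Hsv).
    rewrite !inv_map //.
    by move=> x y Hx Hy; apply: H6; apply: Hsub.
  move=> Hn; case: eqP => [Heq|]; last by rewrite mul0r.
  rewrite /dl; case: ifP => [/andP [Hsv Hus]|]; last by rewrite mulr0.
  exfalso; move/negP: Hn; apply; rewrite Heq perm_map //=.
  rewrite map_inj_in_uniq // => x y Hx Hy; apply: Hinj.
    by rewrite -(perm_mem Hsv).
  by rewrite -(perm_mem Hsv).
rewrite -big_distrl /= sum_expand_eq //.
case Hd: (perm_eq s v && uniq s); last by rewrite /dl Hd mulr0.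
move/andP: Hd => [Hsv _].
rewrite all2_map ?mul1r // => x Hx; apply: H4; by rewrite -(perm_mem Hsv).
Qed.

End Gen.
Section Coef.
Variables (d : Order.disp_t) (T : orderType d) (B : lmodType rat).
Implicit Types (f : gen T -> seq (rat * gen T)%type) (s u : seq (gen T)).

Lemma ecoefE (x : elt T B) u : coef x u = \sum_(t <- x) dl t.2 u *: t.1.
Proof.
rewrite /coef big_mkcond; apply: eq_bigr => t _; rewrite /dl.
by case: ifP => _; rewrite ?scale0r.
Qed.

Lemma coef_cat (x y : elt T B) u : coef (x ++ y) u = coef x u + coef y u.
Proof. by rewrite !ecoefE big_cat. Qed.

Lemma coef_amap f (x : elt T B) u :
  coef (amap f x) u = \sum_(t <- x) E f t.2 u *: t.1.
Proof.
rewrite ecoefE /amap big_flatten big_map; apply: eq_bigr => t _.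
rewrite big_map /E scaler_suml; apply: eq_bigr => p _ /=.
by rewrite scalerA mulrC.
Qed.

Lemma E_zero f s u : (forall p, p \in expand (map f s) -> ~~ perm_eq p.2 u) ->
  E f s u = 0.
Proof.
move=> H; rewrite /E big1_seq // => p /andP [_ Hp].
by rewrite /dl (negbTE (H p Hp)) mulr0.
Qed.

Lemma expand_alpha s : expand (map (@alpha_gen d T) s) = [:: (1, s)].
Proof. by elim: s => [|x s IH] //=; rewrite IH /= mulr1. Qed.

Lemma E_alpha s u : E (@alpha_gen d T) s u = dl s u.
Proof. by rewrite /E expand_alpha big_seq1 mul1r. Qed.

Lemma gen_lt_relabel (m : T -> nat -> nat) :
  (forall t a b, (m t a < m t b)%N = (a < b)%N) ->
  forall x y : gen T, gen_lt (m x.2 x.1, x.2) (m y.2 y.1, y.2) = gen_lt x y.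
Proof.
move=> Hm [n t] [n' t'] /=; rewrite /gen_lt /=.
case: eqP => [<-|_] //=. by rewrite Hm.
Qed.

End Coef.
Section Main.
Variables (d : Order.disp_t) (T : orderType d) (B : lmodType rat).
Variables (r : nat) (I : r.-tuple T) (s0 t0 : 'I_r).
Hypothesis Hst : val t0 = (val s0).+1.
Hypothesis HI : tnth I s0 = tnth I t0.
Implicit Types (s u v : seq (gen T)).

Local Notation i := (tnth I s0).
Local Notation we e := (wordI I e).

Lemma we_size (e : r.-tuple bool) : size (we e) = r.
Proof. by rewrite /wordI size_zip size_map !size_tuple minnn. Qed.

Lemma we_lab (e : r.-tuple bool) x : x \in we e -> (x.1 <= 1)%N.
Proof.
move=> Hx.
have : x.1 \in unzip1 (we e) by apply: map_f.
rewrite /wordI unzip1_zip; last by rewrite size_map !size_tuple.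
by case/mapP => b _ ->; case: b.
Qed.

Lemma we_nth (e : r.-tuple bool) (k : 'I_r) :
  nth (0%N, i) (we e) k = (nat_of_bool (tnth e k), tnth I k).
Proof.
rewrite /wordI nth_zip; last by rewrite size_map !size_tuple.
by rewrite (nth_map false) ?size_tuple // -!tnth_nth.
Qed.

Lemma we_split (e : r.-tuple bool) :
  we e = take s0 (we e) ++ (nat_of_bool (tnth e s0), i)
         :: (nat_of_bool (tnth e t0), i) :: drop t0.+1 (we e).
Proof.
have Ht : (t0 < size (we e))%N by rewrite we_size.
have Hs : (s0 < size (we e))%N by rewrite we_size.
rewrite -{1}(cat_take_drop s0 (we e)) (drop_nth (0%N, i) Hs) we_nth.
by rewrite -Hst (drop_nth (0%N, i) Ht) we_nth HI.
Qed.

Lemma we_uniq01 (e : r.-tuple bool) : uniq (we e) ->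
  ((0%N, i) \in we e) && ((1%N, i) \in we e).
Proof.
rewrite [in X in X -> _]we_split cat_uniq => /and3P [_ _] /= /andP [Hn _].
rewrite inE negb_or in Hn; case/andP: Hn => Hn _.
rewrite we_split !mem_cat !inE.
by case: (tnth e s0) Hn; case: (tnth e t0); rewrite /= ?eqxx ?orbT ?orTb /=.
Qed.

Definition rho (x : gen T) : gen T :=
  if x.2 == i then (x.1.+1, x.2) else (x.1.*2, x.2).
Definition gB (x : gen T) : gen T := (x.1.-1, x.2).
Definition hG (x : gen T) : gen T := if x.2 == i then (x.1.*2, x.2) else x.
Definition gG (x : gen T) : gen T := (minn x.1 1, x.2).
Definition sig (x : gen T) : gen T := if x.2 == i then x else (x.1.-1, x.2).
Definition hB (x : gen T) : gen T :=
  if x.2 == i then (x.1.*2, x.2) else (x.1.+1, x.2).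

Lemma rho_mono : forall x y, gen_lt (rho x) (rho y) = gen_lt x y.
Proof.
move=> x y.
pose m := (fun (t : T) (n : nat) => if t == i then n.+1 else n.*2).
 have E : forall z, rho z = (m z.2 z.1, z.2).
  by move=> z; rewrite /rho /m; case: (z.2 == i).
rewrite !E; apply: (@gen_lt_relabel _ _ m) => t a b; rewrite /m; case: ifP => _.
  by rewrite ltnS. by rewrite ltn_double.
Qed.

Lemma hG_mono : forall x y, gen_lt (hG x) (hG y) = gen_lt x y.
Proof.
move=> x y.
pose m := (fun (t : T) (n : nat) => if t == i then n.*2 else n).
 have E : forall z, hG z = (m z.2 z.1, z.2).
  by move=> z; rewrite /hG /m; case: (z.2 == i); case: z.
rewrite !E; apply: (@gen_lt_relabel _ _ m) => t a b; rewrite /m; case: ifP => _ //.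
by rewrite ltn_double.
Qed.

Lemma hB_mono : forall x y, gen_lt (hB x) (hB y) = gen_lt x y.
Proof.
move=> x y.
pose m := (fun (t : T) (n : nat) => if t == i then n.*2 else n.+1).
 have E : forall z, hB z = (m z.2 z.1, z.2).
  by move=> z; rewrite /hB /m; case: (z.2 == i).
rewrite !E; apply: (@gen_lt_relabel _ _ m) => t a b; rewrite /m; case: ifP => _.
  by rewrite ltn_double. by rewrite ltnS.
Qed.

Lemma beta_c1 (x : gen T) (c : rat * gen T) : c \in beta_gen x -> c.1 = 1.
Proof. rewrite /beta_gen; case: ifP => _ Hc; by repeat (move: Hc; rewrite in_cons => /predU1P [-> //|Hc]); rewrite in_nil in Hc. Qed.

Lemma gamma_c1 (x : gen T) (c : rat * gen T) : c \in gamma_gen x -> c.1 = 1.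
Proof. rewrite /gamma_gen; case: ifP => _ Hc; by repeat (move: Hc; rewrite in_cons => /predU1P [-> //|Hc]); rewrite in_nil in Hc. Qed.

Lemma beta_uniq (x : gen T) : uniq (map snd (beta_gen x)).
Proof. by rewrite /beta_gen; case: ifP => _ //=; rewrite inE /= andbT xpair_eqE. Qed.

Lemma gamma_uniq (x : gen T) : uniq (map snd (gamma_gen x)).
Proof. by rewrite /gamma_gen; case: ifP => _ //=; rewrite inE /= andbT xpair_eqE. Qed.

Lemma beta_back (x : gen T) (c : rat * gen T) : (x.1 <= 1)%N -> c \in beta_gen x -> gB c.2 = x.
Proof.
case: x => [[|[|n]] t] //= _; rewrite /beta_gen /= => Hc; by repeat (move: Hc; rewrite in_cons => /predU1P [-> //|Hc]); rewrite in_nil in Hc.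
Qed.

Lemma gamma_back (x : gen T) (c : rat * gen T) : (x.1 <= 1)%N -> c \in gamma_gen x -> gG c.2 = x.
Proof.
case: x => [[|[|n]] t] //= _; rewrite /gamma_gen /= => Hc; by repeat (move: Hc; rewrite in_cons => /predU1P [-> //|Hc]); rewrite in_nil in Hc.
Qed.

Lemma rho_in (x : gen T) : (x.1 <= 1)%N -> rho x \in map snd (beta_gen x).
Proof. by case: x => [[|[|n]] t] //= _; rewrite /rho /=; case: (t == i); rewrite !inE ?eqxx ?orbT. Qed.

Lemma rho_back (x : gen T) : (x.1 <= 1)%N -> gB (rho x) = x.
Proof. by case: x => [[|[|n]] t] //= _; rewrite /rho /=; case: (t == i). Qed.

Lemma hB_in (x : gen T) : (x.1 <= 1)%N -> hB x \in map snd (beta_gen x).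
Proof. by case: x => [[|[|n]] t] //= _; rewrite /hB /=; case: (t == i); rewrite !inE ?eqxx ?orbT. Qed.

Lemma hB_back (x : gen T) : (x.1 <= 1)%N -> gB (hB x) = x.
Proof. by case: x => [[|[|n]] t] //= _; rewrite /hB /=; case: (t == i). Qed.

Lemma hG_in (x : gen T) : (x.1 <= 1)%N -> hG x \in map snd (gamma_gen x).
Proof. by case: x => [[|[|n]] t] //= _; rewrite /hG /=; case: (t == i); rewrite !inE ?eqxx ?orbT. Qed.

Lemma hG_back (x : gen T) : (x.1 <= 1)%N -> gG (hG x) = x.
Proof. by case: x => [[|[|n]] t] //= _; rewrite /hG /=; case: (t == i). Qed.

Variable a : r.-tuple bool -> B.
Variable es : seq (r.-tuple bool).
Local Notation S f u := (\sum_(e <- es) E f (we e) u *: a e).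
Hypothesis Hyp : forall u, S (@alpha_gen d T) u + S (@beta_gen d T) u =
                           S (@gamma_gen d T) u + S (@delta_gen d T) u.

Lemma S_zero f u : (forall e, E f (we e) u = 0) -> S f u = 0.
Proof. by move=> H; rewrite big1 // => e _; rewrite H scale0r. Qed.

Lemma alpha_zero e u y : y \in u -> (2 <= y.1)%N -> E (@alpha_gen d T) (we e) u = 0.
Proof.
move=> Hy Hl; rewrite E_alpha /dl; case: ifP => // /andP [Hp _].
have : y \in we e by rewrite (perm_mem Hp).
by move/we_lab; lia.
Qed.

Lemma delta_zero e u y : y \in u -> y.1 = 0%N -> E (@delta_gen d T) (we e) u = 0.
Proof.
move=> Hy Hl; apply: E_zero => p Hp; apply/negP => Hpe.
have : y \in p.2 by rewrite (perm_mem Hpe).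
case/(expand_sub Hp) => x _; rewrite /delta_gen; case: ifP => _ /=; rewrite !inE => /eqP Ey;
by rewrite Ey in Hl.
Qed.

Lemma gamma_zero e u : (0%N, i) \notin u -> E (@gamma_gen d T) (we e) u = 0.
Proof.
move=> Hu.
case He0: (tnth e s0); case He1: (tnth e t0).
- by rewrite we_split He0 He1; apply: E_anti.
all: apply: E_zero => p Hp; apply/negP => Hpe; move/negP: Hu; apply.
all: rewrite -(perm_mem Hpe); apply: (expand_single Hp (x := (0%N, i))) => //.
all: by rewrite we_split !mem_cat !inE ?He0 ?He1 eqxx ?orbT.
Qed.

Lemma case1 v : {in v, forall x : gen T, x.1 <= 1}%N -> (1%N, i) \in v ->
  (exists2 k, (0%N, k) \in v & k != i) ->
  \sum_(e <- es) dl (we e) v *: a e = 0.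
Proof.
move=> Hl H1 [k Hk Hki].
have := Hyp (map rho v).
rewrite (S_zero (f := @alpha_gen d T)); last first.
  move=> e; apply: (@alpha_zero e _ (2%N, i)) => //.
  by apply/mapP; exists (1%N, i); rewrite // /rho /= eqxx.
rewrite (S_zero (f := @delta_gen d T)); last first.
  move=> e; apply: (@delta_zero e _ (0%N, k)) => //.
  by apply/mapP; exists (0%N, k); rewrite // /rho /= (negbTE Hki).
rewrite (S_zero (f := @gamma_gen d T)); last first.
  move=> e; apply: gamma_zero; apply/mapP => [[x _]]; rewrite /rho.
  by case: ifP => [_ [] //|/negbT Hx [] _ E2]; rewrite -E2 eqxx in Hx.
rewrite add0r addr0 => HS; rewrite -[RHS]HS; apply: eq_bigr => e _.
rewrite (E_clean (g := gB)) //.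
- exact: beta_c1.
- by move=> x Hx c Hc; apply: beta_back Hc; apply: we_lab Hx.
- exact: beta_uniq.
- by move=> x Hx; apply: rho_in; apply: Hl.
- by move=> x Hx; apply: rho_back; apply: Hl.
- by move=> x y _ _; apply: rho_mono.
Qed.

Lemma case2 v : {in v, forall x : gen T, x.1 <= 1}%N ->
  (0%N, i) \in v -> (1%N, i) \in v ->
  {in v, forall x : gen T, x.2 != i -> x.1 = 1%N} ->
  (exists2 x, x \in v & x.2 != i) ->
  \sum_(e <- es) dl (we e) v *: a e = 0.
Proof.
move=> Hl H0 H1 HJ [y Hy Hyi].
have := Hyp (map hG v).
rewrite (S_zero (f := @alpha_gen d T)); last first.
  move=> e; apply: (@alpha_zero e _ (2%N, i)) => //.
  by apply/mapP; exists (1%N, i); rewrite // /hG /= eqxx.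
rewrite (S_zero (f := @delta_gen d T)); last first.
  move=> e; apply: (@delta_zero e _ (0%N, i)) => //.
  by apply/mapP; exists (0%N, i); rewrite // /hG /= eqxx.
have Hsl : {in map sig v, forall x : gen T, x.1 <= 1}%N.
  move=> z /mapP [x Hx ->]; rewrite /sig; case: ifP => _ /=; have := Hl x Hx; lia.
have Ev : map hG v = map hB (map sig v).
  rewrite -map_comp; apply/eq_in_map => x Hx /=.
  rewrite /hG /hB /sig; case: ifP => [-> //|/negbT Hx2].
  have Hx1 := HJ x Hx Hx2; rewrite /= (negbTE Hx2) Hx1; by case: x Hx1 {Hx Hx2} => n t /= ->.
have -> : S (@beta_gen d T) (map hG v) = 0.
  rewrite Ev -[RHS](@case1 (map sig v)) //.
  - apply: eq_bigr => e _; rewrite (E_clean (g := gB)) //.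
    + exact: beta_c1.
    + by move=> x Hx c Hc; apply: beta_back Hc; apply: we_lab Hx.
    + exact: beta_uniq.
    + by move=> x Hx; apply: hB_in; apply: Hsl.
    + by move=> x Hx; apply: hB_back; apply: Hsl.
    + by move=> x z _ _; apply: hB_mono.
  - by apply/mapP; exists (1%N, i); rewrite // /sig /= eqxx.
  - exists y.2 => //; apply/mapP; exists y => //; rewrite /sig (negbTE Hyi).
    by rewrite (HJ y Hy Hyi).
rewrite add0r addr0 => HS; rewrite [RHS]HS.
apply: eq_bigr => e _.
rewrite (E_clean (g := gG)) //.
- exact: gamma_c1.
- by move=> x Hx c Hc; apply: gamma_back Hc; apply: we_lab Hx.
- exact: gamma_uniq.
- by move=> x Hx; apply: hG_in; apply: Hl.
- by move=> x Hx; apply: hG_back; apply: Hl.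
- by move=> x z _ _; apply: hG_mono.
Qed.

End Main.
Unset Implicit Arguments. Set Strict Implicit. Set Printing Implicit Defensive.
Theorem mainTheorem9 (d : Order.disp_t) (T : orderType d) (B : algType rat)
    (r : nat) (I : r.-tuple T) (a : r.-tuple bool -> B) :
  (3 <= r)%N ->
  sorted (fun x y => (x <= y)%O) I ->
  (exists s t : 'I_r, val t = (val s).+1 /\ tnth I s = tnth I t) ->
  ext_eq (alpha (chi I a) ++ beta (chi I a)) (gamma (chi I a) ++ delta (chi I a)) ->
  ext_eq (chi I a) [::].
Proof.
move=> Hr _ [s0 [t0 [Hst HI]]] Hext v.
pose es := filter (fun e : r.-tuple bool => (0 < count id e < r)%N) (enum {: r.-tuple bool}).
have Hyp : forall u,
  \sum_(e <- es) E (@alpha_gen d T) (wordI I e) u *: a e +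
  \sum_(e <- es) E (@beta_gen d T) (wordI I e) u *: a e =
  \sum_(e <- es) E (@gamma_gen d T) (wordI I e) u *: a e +
  \sum_(e <- es) E (@delta_gen d T) (wordI I e) u *: a e.
  move=> u; have := Hext u.
  by rewrite /alpha /beta /gamma /delta !coef_cat !coef_amap /chi !big_map.
have -> : coef (B:=B) [::] v = 0 by rewrite /coef big_nil.
rewrite ecoefE /chi big_map.
set i := tnth I s0.
case Hc: [&& all (fun x : gen T => x.1 <= 1)%N v, (0%N, i) \in v, (1%N, i) \in v
            & has (fun x : gen T => x.2 != i) v].
  case/and4P: Hc => /allP Hl H0 H1 /hasP [y Hy Hyi].
  case Hk: (has (fun x : gen T => (x.2 != i) && (x.1 == 0%N)) v).
    case/hasP: Hk => [[n k] Hk /andP [Hki /eqP /= Hn]].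
    apply: (case1 Hst HI Hyp) => //; exists k => //; by rewrite -Hn.
  apply: (case2 Hst HI Hyp) => //; last by exists y.
  move=> x Hx Hxi; have := Hl x Hx; move/negbT/hasPn: Hk => /(_ x Hx).
  by rewrite Hxi /=; case: (x.1) => [|[|n]].
rewrite big1 // => e _; rewrite /dl; case: ifP => [/andP [Hp Hu]|]; last by rewrite scale0r.
exfalso; move: Hc => /negbT /negP; apply; apply/and4P.
have Hm := perm_mem Hp.
have /andP [W0 W1] := we_uniq01 Hst HI Hu.
split.
- by apply/allP => x; rewrite -Hm => /we_lab.
- by rewrite -Hm.
- by rewrite -Hm.
apply/negP => /negP /hasPn Hall.
have Huv : uniq v by rewrite -(perm_uniq Hp).
have := uniq_leq_size Huv (s2 := [:: (0%N, i); (1%N, i)]).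
have Hsz : size v = r by rewrite -(perm_size Hp) we_size.
rewrite Hsz /=.
have : (r <= 2)%N -> False by lia.
move=> H H2; apply: H; apply: H2 => x Hx.
have := Hall x Hx; rewrite negbK => /eqP Hx2.
have : (x.1 <= 1)%N by apply: (@we_lab _ _ _ I e); rewrite Hm.
case: x Hx Hx2 => [[|[|n]] t] //= _ ->; rewrite !inE eqxx ?orbT //.
Qed.
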